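(* Let $(N,+,* )$ be a planar nearring presented by $(\Phi,R,M)$, and suppose some $d\in D(N)$ is nonzero and not a zero multiplier. Let $K$ be the set of zero multipliers of $N$ and $F=d*N$. Then: $F=d\Phi\cup\{0\}$ is a subnearring of $N$ which is a nearfield whose multiplicative group $F\setminus\{0\}$ is isomorphic to $\Phi$; $K$ is a normal subgroup of $(N,+)$ invariant under $\Phi$ (so $\Phi$ acts on $K$ as a group of fixed point free automorphisms); $(N,+)$ is the internal semidirect product $K\rtimes F$, i.e. every element of $N$ is uniquely $k+f$ with $k\in K$, $f\in F$; and for $k,k'\in K$, $f,f'\in F$, $$(k+f)*(k'+f')=\begin{cases}0 & f'=0,\\ k\phi_{f'}+f\phi_{f'} & f'\ne0,\end{cases}$$ where for nonzero $f'$, $\phi_{f'}\in\Phi$ is defined by $f'=r_{f'}\phi_{f'}$ with $r_{f'}\in R$. Moreover $K$ is an ideal of $N$.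
   Context: A (right) nearring $(N,+,* )$ is a set with a group $(N,+)$, a semigroup $(N,* )$, and right distributivity $(a+b)*c=a*c+b*c$. $N$ is planar if the relation $a\cong b$ ($x*a=x*b$ for all $x$) has at least $3$ classes and for all $a,b,c$ with $a\not\cong b$ the equation $x*a=x*b+c$ has a unique solution. A nearfield is a nearring in which $(N\setminus\{0\},* )$ is a group. An ideal is a normal additive subgroup $I$ with $i*n\in I$ and $n*m-n*(m+i)\in I$ for all $i\in I$, $n,m\in N$. Every planar nearring arises as follows, and we always consider it so presented. $\Phi\le \mathrm{Aut}(N,+)$ acts on the right, is fixed point free, and $n\mapsto -n+n\phi$ is bijective for each $\phi\ne\mathrm{id}$. $R$ is a set of representatives of the $\Phi$-orbits of $N\setminus\{0\}$ and $M\subseteq R$. Each $a\ne0$ is uniquely $a=r_a\phi_a$, $r_a\in R$, $\phi_a\in\Phi$. Multiplication: $a*b=0$ if $b=0$ or $r_b\in M$, else $a*b=a\phi_b$ (and $0*b=0$). The zero multipliers are the elements of $M\Phi\cup\{0\}$, i.e. those $n$ with $x*n=0$ for all $x$. $D(N)=\{n: n*(a+b)=n*a+n*b\ \forall a,b\}$. *)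

(* Defs.v *)
(* The additive group (N,+) is an arbitrary (possibly infinite, possibly
   non-abelian) group given by its operations; Phi is an abstract group G
   acting on N on the right via [act]. *)

Definition is_group {T : Type} (op : T -> T -> T) (inv : T -> T) (e : T) : Prop :=
  (forall x y z, op x (op y z) = op (op x y) z) /\
  (forall x, op e x = x) /\ (forall x, op x e = x) /\
  (forall x, op (inv x) x = e) /\ (forall x, op x (inv x) = e).

(* The data (Phi, R, M) of a planar nearring presentation:
   - G with act is a group acting faithfully on the right on (N,+) by
     automorphisms (act x g = "x g");
   - Phi is fixed point free, and n |-> -n + n phi is bijective for phi <> id;
   - R is a set of representatives of the Phi-orbits of N \ {0}:
     every a <> 0 is a = (rep a) (ph a) with rep a in R, uniquely;
   - M is a subset of R. *)
Definition presentation {N G : Type}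
  (add : N -> N -> N) (opp : N -> N) (zero : N)
  (gmul : G -> G -> G) (ginv : G -> G) (gone : G)
  (act : N -> G -> N) (R M : N -> Prop) (rep : N -> N) (ph : N -> G) : Prop :=
  is_group add opp zero /\ is_group gmul ginv gone /\
  (forall x, act x gone = x) /\
  (forall x g h, act x (gmul g h) = act (act x g) h) /\
  (forall x y g, act (add x y) g = add (act x g) (act y g)) /\
  (* Phi <= Aut(N,+) as a group of maps: distinct elements act differently *)
  (forall g h, (forall x, act x g = act x h) -> g = h) /\
  (forall x g, act x g = x -> x = zero \/ g = gone) /\
  (forall g, g <> gone -> forall y, exists! n, add (opp n) (act n g) = y) /\
  (forall r, R r -> r <> zero) /\
  (forall a, a <> zero -> R (rep a) /\ a = act (rep a) (ph a)) /\
  (forall r r' g g', R r -> R r' -> act r g = act r' g' -> r = r' /\ g = g') /\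
  (forall r, M r -> R r).

Definition presented_mul {N G : Type} (zero : N) (act : N -> G -> N)
  (M : N -> Prop) (rep : N -> N) (ph : N -> G) (mul : N -> N -> N) : Prop :=
  (forall a b, (b = zero \/ M (rep b)) -> mul a b = zero) /\
  (forall a b, b <> zero -> ~ M (rep b) -> mul a b = act a (ph b)).

Definition is_nearring {N : Type} (add : N -> N -> N) (opp : N -> N) (zero : N)
  (mul : N -> N -> N) : Prop :=
  is_group add opp zero /\
  (forall a b c, mul a (mul b c) = mul (mul a b) c) /\
  (forall a b c, mul (add a b) c = add (mul a c) (mul b c)).

Definition eqv_mul {N : Type} (mul : N -> N -> N) (a b : N) : Prop :=
  forall x, mul x a = mul x b.

Definition is_planar {N : Type} (add : N -> N -> N) (mul : N -> N -> N) : Prop :=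
  (exists a b c, ~ eqv_mul mul a b /\ ~ eqv_mul mul a c /\ ~ eqv_mul mul b c) /\
  (forall a b c, ~ eqv_mul mul a b -> exists! x, mul x a = add (mul x b) c).

Definition distributive_elt {N : Type} (add : N -> N -> N) (mul : N -> N -> N)
  (n : N) : Prop :=
  forall a b, mul n (add a b) = add (mul n a) (mul n b).

Definition zero_multiplier {N : Type} (zero : N) (mul : N -> N -> N) (n : N) : Prop :=
  forall x, mul x n = zero.

Definition subnearring {N : Type} (add : N -> N -> N) (opp : N -> N) (zero : N)
  (mul : N -> N -> N) (S : N -> Prop) : Prop :=
  S zero /\ (forall x y, S x -> S y -> S (add x y)) /\ (forall x, S x -> S (opp x)) /\
  (forall x y, S x -> S y -> S (mul x y)).

Definition nearfield_on {N : Type} (zero : N) (mul : N -> N -> N) (S : N -> Prop) : Prop :=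
  exists e, S e /\ e <> zero /\
    (forall x, S x -> x <> zero -> mul e x = x /\ mul x e = x) /\
    (forall x, S x -> x <> zero ->
       exists y, S y /\ y <> zero /\ mul x y = e /\ mul y x = e).

Definition normal_subgroup {N : Type} (add : N -> N -> N) (opp : N -> N) (zero : N)
  (K : N -> Prop) : Prop :=
  K zero /\ (forall x y, K x -> K y -> K (add x y)) /\ (forall x, K x -> K (opp x)) /\
  (forall n k, K k -> K (add (add n k) (opp n))).

Definition nr_ideal {N : Type} (add : N -> N -> N) (opp : N -> N) (zero : N)
  (mul : N -> N -> N) (I : N -> Prop) : Prop :=
  normal_subgroup add opp zero I /\
  (forall i n, I i -> I (mul i n)) /\
  (forall i n m, I i -> I (add (mul n m) (opp (mul n (add m i))))).

(* Main.v *)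
Require Import Defs.
From Stdlib Require Import Classical.

Theorem mainTheorem6 (N G : Type)
  (add : N -> N -> N) (opp : N -> N) (zero : N)
  (gmul : G -> G -> G) (ginv : G -> G) (gone : G)
  (act : N -> G -> N) (R M : N -> Prop) (rep : N -> N) (ph : N -> G)
  (mul : N -> N -> N)
  (Hpres : presentation add opp zero gmul ginv gone act R M rep ph)
  (Hmul : presented_mul zero act M rep ph mul)
  (Hnr : is_nearring add opp zero mul)
  (Hplanar : is_planar add mul)
  (d : N) (HdD : distributive_elt add mul d) (Hd0 : d <> zero)
  (HdK : ~ zero_multiplier zero mul d) :
  let K := zero_multiplier zero mul in
  let F := fun x => exists n, x = mul d n in
  (forall x, F x <-> (x = zero \/ exists g, x = act d g)) /\
  subnearring add opp zero mul F /\
  nearfield_on zero mul F /\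
  (exists iso : G -> N,
     (forall g, F (iso g) /\ iso g <> zero) /\
     (forall g h, iso g = iso h -> g = h) /\
     (forall x, F x -> x <> zero -> exists g, iso g = x) /\
     (forall g h, iso (gmul g h) = mul (iso g) (iso h))) /\
  normal_subgroup add opp zero K /\
  (forall k g, K k -> K (act k g)) /\
  (forall n, exists k f, K k /\ F f /\ n = add k f /\
     (forall k' f', K k' -> F f' -> n = add k' f' -> k' = k /\ f' = f)) /\
  (forall k k' f f', K k -> K k' -> F f -> F f' ->
     (f' = zero -> mul (add k f) (add k' f') = zero) /\
     (f' <> zero -> mul (add k f) (add k' f') = add (act k (ph f')) (act f (ph f')))) /\
  nr_ideal add opp zero mul K.
Proof.
  intros K F.
  destruct Hpres as [Hgrp [Hggrp [Hact1 [Hactm [Hacta [Hfaith [Hfpf [Hbij [HR0 [Hrep [Huniq HMR]]]]]]]]]]].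
  destruct Hgrp as [Hass [H0l [H0r [Hinvl Hinvr]]]].
  destruct Hggrp as [Gass [G0l [G0r [Ginvl Ginvr]]]].
  destruct Hmul as [Hmz Hmnz].
  destruct Hnr as [_ [Hmass Hrd]].
  assert (Lcanr : forall a b c, add a c = add b c -> a = b).
  { intros a b c H. rewrite <- (H0r a), <- (H0r b), <- (Hinvr c), !Hass, H. reflexivity. }
  assert (Lcanl : forall a b c, add c a = add c b -> a = b).
  { intros a b c H. rewrite <- (H0l a), <- (H0l b), <- (Hinvl c), <- !Hass, H. reflexivity. }
  assert (Gcanl : forall a b c, gmul c a = gmul c b -> a = b).
  { intros a b c H. rewrite <- (G0l a), <- (G0l b), <- (Ginvl c), <- !Gass, H. reflexivity. }
  assert (Lopp : forall a b, add a b = zero -> b = opp a).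
  { intros a b H. apply (Lcanl _ _ a). rewrite H, Hinvr. reflexivity. }
  assert (Act0 : forall g, act zero g = zero).
  { intros g. apply (Lcanr _ _ (act zero g)). rewrite <- Hacta, !H0l. reflexivity. }
  assert (ActNZ : forall x g, x <> zero -> act x g <> zero).
  { intros x g Hx H. apply Hx. rewrite <- (Hact1 x), <- (Ginvr g), Hactm, H, Act0. reflexivity. }
  assert (ActOpp : forall x g, act (opp x) g = opp (act x g)).
  { intros x g. apply Lopp. rewrite <- Hacta, Hinvr, Act0. reflexivity. }
  assert (RepAct : forall n g, n <> zero -> rep (act n g) = rep n /\ ph (act n g) = gmul (ph n) g).
  { intros n g Hn. pose proof (ActNZ n g Hn) as Hng.
    destruct (Hrep _ Hng) as [R1 E1]. destruct (Hrep _ Hn) as [R2 E2].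
    apply Huniq; auto. rewrite <- E1, Hactm, <- E2. reflexivity. }
  assert (HdM : ~ M (rep d)).
  { intros HM. apply HdK. intros x. apply Hmz. right. exact HM. }
  assert (MulD : forall x h, mul x (act d h) = act x (gmul (ph d) h)).
  { intros x h. destruct (RepAct d h Hd0) as [E1 E2].
    rewrite Hmnz. rewrite E2. reflexivity. apply ActNZ; auto. rewrite E1; auto. }
  assert (ActDinj : forall a b, act d a = act d b -> a = b).
  { intros a b H. destruct (Hrep _ Hd0) as [Rd Ed].
    rewrite Ed, <- !Hactm in H. apply Huniq in H; auto. destruct H as [_ H].
    apply Gcanl in H. exact H. }
  assert (Mz : forall x, mul x zero = zero).
  { intros x. apply Hmz. left; reflexivity. }
  assert (DOpp : forall a, mul d (opp a) = opp (mul d a)).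
  { intros a. apply Lopp. rewrite <- HdD, Hinvr. apply Mz. }
  assert (Dn : forall n, (mul d n = zero /\ (n = zero \/ M (rep n))) \/
                         (n <> zero /\ ~ M (rep n) /\ mul d n = act d (ph n))).
  { intros n. destruct (classic (n = zero \/ M (rep n))) as [H|H].
    - left. split; [apply Hmz; exact H|exact H].
    - right. apply not_or_and in H. destruct H as [H1 H2]. split; [exact H1|split; [exact H2|apply Hmnz; assumption]]. }
  assert (KD : forall x, K x <-> mul d x = zero).
  { intros x. split.
    - intros H. apply H.
    - intros H y. destruct (Dn x) as [[_ Hx]|[_ [_ Hx]]].
      + apply Hmz. exact Hx.
      + rewrite Hx in H. exfalso. apply (ActNZ d (ph x)); auto. }
  assert (Dsame : forall x y z, mul d x = mul d y -> mul z x = mul z y).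
  { intros x y z H. destruct (Dn x) as [[Hx1 Hx2]|[Hx1 [Hx2 Hx3]]].
    - assert (K y) as Ky. { apply KD. rewrite <- H. exact Hx1. }
      rewrite (Hmz z x Hx2). symmetry. apply Ky.
    - destruct (Dn y) as [[Hy1 Hy2]|[Hy1 [Hy2 Hy3]]].
      + exfalso. rewrite Hy1, Hx3 in H. apply (ActNZ d (ph x)); auto.
      + rewrite Hx3, Hy3 in H. apply ActDinj in H.
        rewrite (Hmnz z x Hx1 Hx2), (Hmnz z y Hy1 Hy2), H. reflexivity. }
  assert (FChar : forall x, F x <-> (x = zero \/ exists g, x = act d g)).
  { intros x. split.
    - intros [n Hn]. subst x. destruct (Dn n) as [[H _]|[_ [_ H]]]; rewrite H; eauto.
    - intros [H|[g H]].
      + exists zero. rewrite Mz. exact H.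
      + subst x. destruct (Hrep _ Hd0) as [Rd Ed].
        exists (act (rep d) g). assert (Hn : act (rep d) g <> zero) by (apply ActNZ; auto).
        destruct (Hrep _ Hn) as [R1 E1].
        assert (rep (act (rep d) g) = rep d /\ ph (act (rep d) g) = g) as [E2 E3].
        { apply Huniq; [exact R1|exact Rd|symmetry; exact E1]. }
        rewrite (Hmnz d _ Hn). rewrite E3; reflexivity. rewrite E2; exact HdM. }
  set (p := ph d).
  set (e := act d (ginv p)).
  assert (Fe : F e). { apply FChar. right. exists (ginv p). reflexivity. }
  assert (De : mul d e = d).
  { unfold e. rewrite MulD. fold p. rewrite Ginvr, Hact1. reflexivity. }
  assert (FInj : forall f f', F f -> F f' -> mul d f = mul d f' -> f = f').
  { intros f f' Hf Hf' H. apply FChar in Hf. apply FChar in Hf'.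
    destruct Hf as [Hf|[g Hf]]; destruct Hf' as [Hf'|[g' Hf']]; subst f f'; auto.
    - rewrite Mz, MulD in H. exfalso. apply (ActNZ d (gmul (ph d) g')); auto.
    - rewrite Mz, MulD in H. exfalso. apply (ActNZ d (gmul (ph d) g)); auto.
    - rewrite !MulD in H. apply ActDinj, Gcanl in H. subst; reflexivity. }
  assert (Kadd : forall x y, K x -> K y -> K (add x y)).
  { intros x y Hx Hy. apply KD. rewrite HdD, (proj1 (KD x) Hx), (proj1 (KD y) Hy). apply H0l. }
  assert (Kopp : forall x, K x -> K (opp x)).
  { intros x Hx. apply KD. rewrite DOpp, (proj1 (KD x) Hx).
    symmetry. apply Lopp. apply H0l. }
  assert (Kz : K zero). { intros x. apply Mz. }
  assert (Kact : forall k g, K k -> K (act k g)).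
  { intros k g Hk0. pose proof (proj1 (KD k) Hk0) as Hk. apply KD.
    destruct (Dn k) as [[_ [H|H]]|[H1 [H2 H3]]].
    - rewrite H. rewrite Act0. apply Mz.
    - destruct (classic (k = zero)) as [Hz|Hz].
      + rewrite Hz. rewrite Act0. apply Mz.
      + apply Hmz. right. rewrite (proj1 (RepAct k g Hz)). exact H.
    - rewrite H3 in Hk. exfalso. apply (ActNZ d (ph k)); auto. }
  assert (Kmul : forall x y, K x -> K (mul x y)).
  { intros x y Hx. destruct (Dn y) as [[_ H]|[H1 [H2 _]]].
    - rewrite Hmz; auto.
    - rewrite Hmnz; auto. }
  split; [exact FChar|].
  split.
  { split; [|split; [|split]].
    - exists zero. symmetry. apply Mz.
    - intros x y [a Ha] [b Hb]. exists (add a b). rewrite HdD, Ha, Hb. reflexivity.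
    - intros x [a Ha]. exists (opp a). rewrite DOpp, Ha. reflexivity.
    - intros x y [a Ha] [b Hb]. exists (mul a y). rewrite Hmass, <- Ha. reflexivity. }
  split.
  { exists e. split; [exact Fe|]. split; [unfold e; apply ActNZ; auto|]. split.
    - intros x Hx Hx0. apply FChar in Hx. destruct Hx as [Hx|[g Hx]]; [contradiction|].
      subst x. unfold e. rewrite !MulD, <- !Hactm. fold p. split; f_equal.
      + rewrite Gass, Ginvl, G0l. reflexivity.
      + rewrite Ginvr, G0r. reflexivity.
    - intros x Hx Hx0. apply FChar in Hx. destruct Hx as [Hx|[g Hx]]; [contradiction|].
      subst x. exists (act d (gmul (ginv p) (gmul (ginv g) (ginv p)))).
      split. { apply FChar. right. eexists; reflexivity. }
      split. { apply ActNZ; auto. }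
      unfold e. rewrite !MulD, <- !Hactm. fold p. split; f_equal.
      + rewrite !Gass, <- (Gass g p), Ginvr, G0r, Ginvr, G0l. reflexivity.
      + rewrite !Gass, <- (Gass _ (ginv p) p), Ginvl, G0r, <- Gass, Ginvl, G0r. reflexivity. }
  split.
  { exists (fun g => act d (gmul (ginv p) g)). split; [|split; [|split]].
    - intros g. split. apply FChar. right. eexists; reflexivity. apply ActNZ; auto.
    - intros g h H. apply ActDinj, Gcanl in H. exact H.
    - intros x Hx Hx0. apply FChar in Hx. destruct Hx as [Hx|[g Hx]]; [contradiction|].
      exists (gmul p g). subst x. rewrite Gass, Ginvl, G0l. reflexivity.
    - intros g h. rewrite MulD, <- Hactm. fold p. f_equal.
      rewrite (Gass p (ginv p) h), Ginvr, G0l, Gass. reflexivity. }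
  assert (NS : normal_subgroup add opp zero K).
  { split; [exact Kz|]. split; [exact Kadd|]. split; [exact Kopp|].
    intros n k Hk. apply KD. rewrite !HdD, DOpp, (proj1 (KD k) Hk), H0r, Hinvr. reflexivity. }
  split; [exact NS|].
  split; [exact Kact|].
  split.
  { intros n. exists (add n (opp (mul e n))), (mul e n).
    assert (Fen : F (mul e n)).
    { destruct Fe as [m Hm]. exists (mul m n). rewrite Hm, Hmass. reflexivity. }
    assert (Den : mul d (mul e n) = mul d n) by (rewrite Hmass, De; reflexivity).
    split.
    { apply KD. rewrite HdD, DOpp, Den, Hinvr. reflexivity. }
    split; [exact Fen|].
    split. { rewrite <- Hass, Hinvl, H0r. reflexivity. }
    intros k' f' Hk' Hf' Hn.
    assert (f' = mul e n) as Ef.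
    { apply FInj; auto. rewrite Den, Hn, HdD, (proj1 (KD k') Hk'), H0l. reflexivity. }
    split; [|exact Ef]. subst f'. apply (Lcanr _ _ (mul e n)).
    rewrite <- Hn, <- Hass, Hinvl, H0r. reflexivity. }
  split.
  { intros k k' f f' Hk Hk' Hf Hf'. split.
    - intros E. subst f'. rewrite H0r. apply Hk'.
    - intros Hf0. assert (Hs : mul d (add k' f') = mul d f').
      { rewrite HdD, (proj1 (KD k') Hk'), H0l. reflexivity. }
      rewrite (Dsame _ _ _ Hs).
      apply FChar in Hf'. destruct Hf' as [Hf'|[g Hg]]; [contradiction|].
      assert (Hr : rep f' = rep d) by (rewrite Hg; apply RepAct; auto).
      rewrite (Hmnz _ f' Hf0); [apply Hacta | rewrite Hr; exact HdM]. }
  split; [exact NS|]. split; [exact Kmul|].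
  intros i n m Hi. rewrite (Dsame (add m i) m n).
  - rewrite Hinvr. exact Kz.
  - rewrite HdD, (proj1 (KD i) Hi), H0r. reflexivity.
Qed.
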